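(* For an idempotent semiring $S$ the following are equivalent: (1) $S$ satisfies $x\approx xyx+x+xyx$ (equivalently, $\mathcal{D}^{\bullet}$ is the least distributive lattice congruence on $S$); (2) $S$ satisfies both identities $xz\approx xz+xyz$ and $xz\approx xyz+xz$; (3) $S$ satisfies $xz\approx xyz+xz+xyz$.
   Context: An idempotent semiring is an algebra $(S,+,\cdot)$ with $(S,+)$, $(S,\cdot)$ bands and both distributive laws; addition not assumed commutative. $a\,\mathcal{D}^{\bullet}\,b$ iff $aba=a$ and $bab=b$. A distributive lattice congruence is a congruence $\rho$ with $S/\rho$ satisfying $x+y\approx y+x$, $xy\approx yx$, $x+xy\approx x$. *)

(* Defs.v *)
(* An idempotent semiring: (S,+), (S,.) are bands (idempotent semigroups),
   and both distributive laws hold. Addition is NOT assumed commutative. *)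
Record is_idem_semiring {S : Type} (add mul : S -> S -> S) : Prop := {
  add_assoc : forall x y z, add x (add y z) = add (add x y) z;
  add_idem  : forall x, add x x = x;
  mul_assoc : forall x y z, mul x (mul y z) = mul (mul x y) z;
  mul_idem  : forall x, mul x x = x;
  mul_distl : forall x y z, mul x (add y z) = add (mul x y) (mul x z);
  mul_distr : forall x y z, mul (add x y) z = add (mul x z) (mul y z)
}.

(* Main.v *)
Require Import Defs.
From Stdlib Require Import Setoid.

Lemma key (S : Type) (add mul : S -> S -> S)
  (HS : is_idem_semiring add mul)
  (H1 : forall x y : S, x = add (add (mul (mul x y) x) x) (mul (mul x y) x)) :
  forall x y z, add (mul x z) (mul (mul x y) z) = mul x z /\ add (mul (mul x y) z) (mul x z) = mul x z.
Proof.
  destruct HS as [aA aI mA mI dl dr].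
  assert (absR : forall u w, add u (mul (mul u w) u) = u).
  { intros u w. pose proof (H1 u w) as E. set (p := mul (mul u w) u) in *.
    rewrite E at 1. rewrite <- aA, aI. symmetry; exact E. }
  assert (absL : forall u w, add (mul (mul u w) u) u = u).
  { intros u w. pose proof (H1 u w) as E. set (p := mul (mul u w) u) in *.
    rewrite E at 1. rewrite !aA, aI. symmetry; exact E. }
  intros x y z.
  set (a := mul x z). set (b := mul (mul x y) z).
  set (t1 := mul (mul (mul x y) x) z).
  set (t3 := mul (mul (mul (mul x z) y) x) z).
  set (t4 := mul (mul (mul x z) y) z).
  assert (Ht1 : add a t1 = a).
  { unfold a, t1. rewrite <- dr. rewrite absR. reflexivity. }
  assert (Ht3 : add t3 a = a).
  { unfold a, t3. rewrite <- (mA (mul (mul x z) y)). apply absL. }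
  assert (Ht4 : add t4 a = a).
  { unfold a, t4. rewrite <- !mA, <- dl. f_equal. rewrite mA. apply absL. }
  set (P := add (add (add t1 t3) b) t4).
  assert (HP : a = add (add P a) P).
  { set (m := add x z). set (q := mul (mul m y) m).
    assert (E : mul (mul x m) z = add (add (mul (mul x q) z) (mul (mul x m) z)) (mul (mul x q) z)).
    { rewrite (H1 m y) at 1. fold q. rewrite !dl, !dr. reflexivity. }
    assert (Xm : mul (mul x m) z = a).
    { unfold m, a. rewrite dl, mI, dr, <- (mA x z z), mI, aI. reflexivity. }
    assert (Xq : mul (mul x q) z = P).
    { unfold q, m, P, t1, b, t3, t4. rewrite !dl, !dr, !dl, !dr, !mA, !mI.
      rewrite <- (mA (mul x y) z z), <- (mA (mul (mul x z) y) z z), !mI, !aA. reflexivity. }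
    rewrite Xm, Xq in E. exact E. }
  assert (aP : add a P = a).
  { rewrite HP at 1. rewrite <- aA, aI. symmetry; exact HP. }
  assert (Pa : add P a = a).
  { rewrite HP at 1. rewrite !aA, aI. symmetry; exact HP. }
  assert (Ha3 : add a t3 = a).
  { unfold t3, a. rewrite <- (mA (mul (mul x z) y) x z). apply absR. }
  assert (F1 : add (add a b) t4 = a).
  { unfold P in aP. rewrite !aA, Ht1, Ha3 in aP. exact aP. }
  assert (Ra : add t3 (add t4 a) = a). { rewrite Ht4, Ht3. reflexivity. }
  assert (aba : add a (mul a b) = a).
  { unfold a, b. rewrite !mA. rewrite <- (mA x z x), <- (mA (mul x (mul z x)) y z),
      <- (mA x (mul z x) (mul y z)), <- (mA z x (mul y z)), (mA x y z), <- dl.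
    f_equal. rewrite (mA z (mul x y) z). apply absR. }
  assert (baa : add a (mul b a) = a).
  { unfold a, b. rewrite <- (mA x y z), <- (mA x (mul y z) (mul x z)), (mA (mul y z) x z),
      (mA x (mul (mul y z) x) z), <- dr. f_equal. rewrite mA. apply absR. }
  assert (aba' : add (mul a b) a = a).
  { unfold a, b. rewrite !mA. rewrite <- (mA x z x), <- (mA (mul x (mul z x)) y z),
      <- (mA x (mul z x) (mul y z)), <- (mA z x (mul y z)), (mA x y z), <- dl.
    f_equal. rewrite (mA z (mul x y) z). apply absL. }
  assert (baa' : add (mul b a) a = a).
  { unfold a, b. rewrite <- (mA x y z), <- (mA x (mul y z) (mul x z)), (mA (mul y z) x z),
      (mA x (mul (mul y z) x) z), <- dr. f_equal. rewrite mA. apply absL. }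
  split.
  - assert (Ee : add a b = add (add a b) a).
    { pose proof (H1 (add a b) a) as E.
      assert (Q : mul (mul (add a b) a) (add a b) = a).
      { rewrite dr, mI, baa, dl, mI, aba. reflexivity. }
      rewrite Q in E. rewrite E at 1. rewrite !aA, aI. reflexivity. }
    rewrite Ee. rewrite <- Ht4 at 2. rewrite aA, F1, aI. reflexivity.
  - assert (Ee : add b a = add (add a b) a).
    { pose proof (H1 (add b a) a) as E.
      assert (Q : mul (mul (add b a) a) (add b a) = a).
      { rewrite dr, mI, baa', dl, mI, aba'. reflexivity. }
      rewrite Q in E. rewrite E at 1. rewrite !aA, <- aA, aI. reflexivity. }
    assert (G : add (add (add t1 t3) b) a = a).
    { rewrite <- Ht4 at 1. rewrite aA. exact Pa. }
    rewrite Ee, <- Ha3 at 1. rewrite <- Ht1 at 1.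
    rewrite <- !aA. rewrite (aA t1 t3), (aA (add t1 t3)). rewrite G. apply aI.
Qed.

Theorem lemma4p5 (S : Type) (add mul : S -> S -> S)
  (HS : is_idem_semiring add mul) :
  ((forall x y : S,
      x = add (add (mul (mul x y) x) x) (mul (mul x y) x))
   <->
   ((forall x y z : S, mul x z = add (mul x z) (mul (mul x y) z)) /\
    (forall x y z : S, mul x z = add (mul (mul x y) z) (mul x z))))
  /\
  (((forall x y z : S, mul x z = add (mul x z) (mul (mul x y) z)) /\
    (forall x y z : S, mul x z = add (mul (mul x y) z) (mul x z)))
   <->
   (forall x y z : S,
      mul x z = add (add (mul (mul x y) z) (mul x z)) (mul (mul x y) z))).
Proof.
  pose proof (key S add mul HS) as K.
  destruct HS as [aA aI mA mI dl dr].
  split; split.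
  - intros H1. split; intros x y z; symmetry; apply (K H1 x y z).
  - intros [h2a h2b] x y.
    pose proof (h2a x y x) as A. pose proof (h2b x y x) as B.
    rewrite mI in A, B. rewrite <- B. exact A.
  - intros [h2a h2b] x y z.
    rewrite <- aA, <- (h2a x y z), <- (h2b x y z). reflexivity.
  - intros h3. split; intros x y z.
    + set (a := mul x z) in *. set (b := mul (mul x y) z) in *.
      pose proof (h3 x y z) as E. fold a b in E.
      assert (add a b = a).
      { rewrite E at 1. rewrite <- aA, aI. symmetry. exact E. }
      symmetry; assumption.
    + set (a := mul x z) in *. set (b := mul (mul x y) z) in *.
      pose proof (h3 x y z) as E. fold a b in E.
      assert (add b a = a).
      { rewrite E at 1. rewrite !aA, aI. symmetry. exact E. }
      symmetry; assumption.
Qed.
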